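(* Let $\mathcal V_{r_p}=\{\bm v_1,\ldots,\bm v_{r_p}\}\subset\mathbb R^q$ be the UD skeleton, let $\mathcal K$ be a reproducing kernel on $[0,1]^q\times[0,1]^q$, and let $f:[0,1]^q\to\mathbb R$ have $V_2(f,\mathcal K)<\infty$ and be such that $\varphi_f(\bm z)=f(T_{\bm Z}(\bm z))$ is Lipschitz on $\mathcal Z\cup\mathcal V_{r_p}$ with constant $L_f$. Then for $\phi_f(\bm x)=f(\mathcal T(\bm x))$, \[ \left|\int\phi_f\,dP_{\mathcal S_1,\bm X}-\int\phi_f\,dP_{\mathcal S_0,\bm X}\right|\le L_f\bigl(\delta_1^{(\mathrm{rot})}+\delta_0^{(\mathrm{rot})}\bigr). \]
   Context: Data: $(Y_i,W_i,\bm X_i)$, $i=1,\ldots,n$, with $W_i\in\{0,1\}$, $\bm X_i\in\mathbb R^p$; both arms nonempty. Let $\bar{\bm X}=n^{-1}\sum_i\bm X_i$, $\widehat{\bm D}$ the diagonal matrix of (positive) sample standard deviations, $\widetilde{\bm X}_i=\widehat{\bm D}^{-1}(\bm X_i-\bar{\bm X})$, $\widetilde{\bm X}=\bm U\bm\Sigma\bm V^\top$ the SVD (singular values decreasing) of the matrix with rows $\widetilde{\bm X}_i^\top$; for chosen $q\le p$, $\bm V_q$ = first $q$ columns of $\bm V$, $\Pi_q(\bm x)=\bm V_q^\top\widehat{\bm D}^{-1}(\bm x-\bar{\bm X})$, $\bm Z_i=\Pi_q(\bm X_i)$, $\mathcal Z=\{\bm Z_i\}_{i=1}^n$. $\widehat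 F_{Z^{(d)}}$ is the empirical CDF of $\{Z_i^{(d)}\}_i$, $T_{\bm Z}(\bm z)=(\widehat F_{Z^{(1)}}(z^{(1)}),\ldots,\widehat F_{Z^{(q)}}(z^{(q)}))^\top$, $\mathcal T(\bm x)=T_{\bm Z}(\Pi_q(\bm x))$. The UD skeleton $\mathcal V_{r_p}=\{\bm v_j\}\subset\mathbb R^q$ has $\bm v_j=(\widehat F^{-1}_{Z^{(1)}}(u_{j1}),\ldots,\widehat F^{-1}_{Z^{(q)}}(u_{jq}))^\top$ for a design $\{\bm u_j\}\subset[0,1]^q$. For $g\in\{0,1\}$, $i_j^g\in\arg\min_{i:W_i=g}\|\bm Z_i-\bm v_j\|_2$, $\mathcal S_g=\{i_j^g\}_{j=1}^{r_p}$, $\delta_g^{(\mathrm{rot})}=\max_j\|\bm Z_{i_j^g}-\bm v_j\|_2$, and $P_{\mathcal S_g,\bm X}=r_p^{-1}\sum_{j=1}^{r_p}\delta_{\bm X_{i_j^g}}$. $V_2(f,\mathcal K)$ is the generalized (Hickernell) variation of $f$ with respect to $\mathcal K$ (the quantity appearing in the Koksma–Hlawka inequality $|n^{-1}\sum_i f(T_{\bm Z}(\bm Z_i))-m^{-1}\sum_k f(T_{\bm Z}(\bm\xi_k))|\le D(\{\bm\xi_k\};\mathcal Z,\mathcal K)V_2(f,\mathcal K)$, with $D$ the generalized empirical $F$-discrepancy). *)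

(* Defs.v *)
From HB Require Import structures.
From mathcomp Require Import all_boot all_order all_algebra.
From mathcomp Require Import boolp classical_sets reals.
Set Implicit Arguments. Unset Strict Implicit. Unset Printing Implicit Defensive.
Import Order.TTheory GRing.Theory Num.Theory.
Local Open Scope ring_scope.

Section UD.
Variable R : realType.

Definition norm2 (k : nat) (x : 'rV[R]_k) : R := Num.sqrt (\sum_(d < k) x 0 d ^+ 2).

Definition in_cube (k : nat) (x : 'rV[R]_k) : Prop := forall d, 0 <= x 0 d <= 1.

Section Data.
Variables (n p : nat) (X : 'I_n -> 'rV[R]_p).

Definition xbar : 'rV[R]_p := n%:R^-1 *: \sum_(i < n) X i.

Definition sdev (d : 'I_p) : R :=
  Num.sqrt ((n.-1)%:R^-1 * \sum_(i < n) (X i 0 d - xbar 0 d) ^+ 2).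

Definition standardize (x : 'rV[R]_p) : 'rV[R]_p :=
  \row_d ((x 0 d - xbar 0 d) / sdev d).

Definition Xtilde : 'M[R]_(n, p) := \matrix_(i, d) standardize (X i) 0 d.

(* Pi_q(x) = V_q^T D^{-1}(x - \bar X), written as a row vector *)
Definition Piq (q : nat) (hq : (q <= p)%N) (V : 'M[R]_p) (x : 'rV[R]_p) : 'rV[R]_q :=
  standardize x *m (\matrix_(d, k) V d (widen_ord hq k)).

Definition Zdata (q : nat) (hq : (q <= p)%N) (V : 'M[R]_p) : 'I_n -> 'rV[R]_q :=
  fun i => Piq hq V (X i).
End Data.

Definition is_svd (n p : nat) (A : 'M[R]_(n, p)) (U : 'M[R]_n) (S : 'M[R]_(n, p))
    (V : 'M[R]_p) : Prop :=
  [/\ U^T *m U = 1%:M, V^T *m V = 1%:M, A = U *m S *m V^T &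
   [/\
      (forall (i : 'I_n) (j : 'I_p), (i : nat) <> j -> S i j = 0),
      (forall (i : 'I_n) (j : 'I_p), (i : nat) = j -> 0 <= S i j) &
      (forall (i i' : 'I_n) (j j' : 'I_p), (i : nat) = j -> (i' : nat) = j' ->
          (i <= i')%N -> S i' j' <= S i j)]].

Section Transform.
Variables (n q : nat) (Z : 'I_n -> 'rV[R]_q).

Definition ecdf (d : 'I_q) (t : R) : R :=
  n%:R^-1 * (#|[set i : 'I_n | Z i 0 d <= t]|)%:R.

Definition TZ (z : 'rV[R]_q) : 'rV[R]_q := \row_d ecdf d (z 0 d).

Definition quantile (d : 'I_q) (u : R) : R := inf [set t : R | u <= ecdf d t].

Definition skeleton (r : nat) (u : 'I_r -> 'rV[R]_q) : 'I_r -> 'rV[R]_q :=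
  fun j => \row_d quantile d (u j 0 d).

Definition nn_selection (r : nat) (W : 'I_n -> bool) (v : 'I_r -> 'rV[R]_q)
    (g : bool) (sel : 'I_r -> 'I_n) : Prop :=
  forall j, W (sel j) = g /\
    (forall i, W i = g -> norm2 (Z (sel j) - v j) <= norm2 (Z i - v j)).

Definition delta_rot (r : nat) (v : 'I_r -> 'rV[R]_q) (sel : 'I_r -> 'I_n) : R :=
  \big[Num.max/0]_(j < r) norm2 (Z (sel j) - v j).
End Transform.

(* integral of g against P_{S,X} = r^{-1} sum_j delta_{X_{sel j}} *)
Definition emp_int (n p r : nat) (X : 'I_n -> 'rV[R]_p) (sel : 'I_r -> 'I_n)
    (g : 'rV[R]_p -> R) : R :=
  r%:R^-1 * \sum_(j < r) g (X (sel j)).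

Definition is_rep_kernel (q : nat) (K : 'rV[R]_q -> 'rV[R]_q -> R) : Prop :=
  (forall x y, in_cube x -> in_cube y -> K x y = K y x) /\
  (forall (m : nat) (xs : 'I_m -> 'rV[R]_q) (c : 'I_m -> R),
      (forall i, in_cube (xs i)) ->
      0 <= \sum_(i < m) \sum_(j < m) c i * c j * K (xs i) (xs j)).

(* V_2(f,K) < oo : f lies in the RKHS of K (Aronszajn's characterisation:
   point evaluations of f are bounded in the kernel norm) *)
Definition finite_variation (q : nat) (K : 'rV[R]_q -> 'rV[R]_q -> R)
    (f : 'rV[R]_q -> R) : Prop :=
  exists M : R, forall (m : nat) (xs : 'I_m -> 'rV[R]_q) (c : 'I_m -> R),
    (forall i, in_cube (xs i)) ->
    (\sum_(i < m) c i * f (xs i)) ^+ 2 <=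
      M * \sum_(i < m) \sum_(j < m) c i * c j * K (xs i) (xs j).

Definition lipschitz_on (q : nat) (A : 'rV[R]_q -> Prop) (phi : 'rV[R]_q -> R)
    (L : R) : Prop :=
  forall a b, A a -> A b -> `|phi a - phi b| <= L * norm2 (a - b).

End UD.

(* Main.v *)
Require Import Defs.
From HB Require Import structures.
From mathcomp Require Import all_boot all_order all_algebra.
From mathcomp Require Import boolp classical_sets reals.
From mathcomp Require Import ring.
Import Order.TTheory GRing.Theory Num.Theory.
Local Open Scope ring_scope.

Lemma norm2_ge0 (R : realType) k (x : 'rV[R]_k) : 0 <= norm2 x.
Proof. exact: sqrtr_ge0. Qed.

Lemma norm2N (R : realType) k (x : 'rV[R]_k) : norm2 (- x) = norm2 x.
Proof. rewrite /norm2; congr Num.sqrt; apply: eq_bigr => d _; by rewrite mxE sqrrN. Qed.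

Lemma delta_bound (R : realType) (n q r : nat) (Z : 'I_n -> 'rV[R]_q)
  (v : 'I_r -> 'rV[R]_q) (sel : 'I_r -> 'I_n) (Lf : R) :
  (forall j, 0 <= Lf * norm2 (Z (sel j) - v j)) ->
  forall j, Lf * norm2 (Z (sel j) - v j) <= Lf * delta_rot Z v sel.
Proof.
move=> H j; have [L0|L0] := leP 0 Lf.
  by apply: ler_wpM2l => //; apply: le_bigmax.
have Z0 : forall j, norm2 (Z (sel j) - v j) = 0.
  move=> j'; apply/eqP; rewrite eq_le norm2_ge0 andbT.
  by have := H j'; rewrite nmulr_rge0.
have -> : delta_rot Z v sel = 0.
  rewrite /delta_rot; elim/big_ind: _ => //.
  by move=> x y -> ->; rewrite maxxx.
by rewrite Z0.
Qed.

Lemma delta_nonneg (R : realType) (n q r : nat) (Z : 'I_n -> 'rV[R]_q)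
  (v : 'I_r -> 'rV[R]_q) (sel : 'I_r -> 'I_n) (Lf : R) :
  (forall j, 0 <= Lf * norm2 (Z (sel j) - v j)) ->
  0 <= Lf * delta_rot Z v sel.
Proof.
move=> H; have [L0|L0] := leP 0 Lf.
  apply: mulr_ge0 => //; rewrite /delta_rot; elim/big_ind: _ => //.
    by move=> x y hx hy; rewrite le_max hx.
  by move=> j _; exact: norm2_ge0.
have Z0 : forall j, norm2 (Z (sel j) - v j) = 0.
  move=> j'; apply/eqP; rewrite eq_le norm2_ge0 andbT.
  by have := H j'; rewrite nmulr_rge0.
have -> : delta_rot Z v sel = 0.
  rewrite /delta_rot; elim/big_ind: _ => //.
  by move=> x y -> ->; rewrite maxxx.
by rewrite mulr0.
Qed.

Lemma natVK_le (R : realType) (m : nat) (C : R) : 0 <= C ->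
  m%:R^-1 * (C *+ m) <= C.
Proof.
move=> C0; case: m => [|m]; first by rewrite mulr0n mulr0.
by rewrite -[C *+ _]mulr_natl mulrA mulVf ?pnatr_eq0 // mul1r.
Qed.

Theorem theorem2 (R : realType) (n p q r : nat)
  (Y : 'I_n -> R) (W : 'I_n -> bool) (X : 'I_n -> 'rV[R]_p)
  (arm1 : exists i, W i) (arm0 : exists i, ~~ W i)
  (sd_pos : forall d, 0 < sdev X d)
  (U : 'M[R]_n) (S : 'M[R]_(n, p)) (V : 'M[R]_p)
  (hsvd : is_svd (Xtilde X) U S V)
  (hq : (q <= p)%N)
  (u : 'I_r -> 'rV[R]_q) (hu : forall j, in_cube (u j))
  (K : 'rV[R]_q -> 'rV[R]_q -> R) (hK : is_rep_kernel K)
  (f : 'rV[R]_q -> R) (hf : finite_variation K f)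
  (Lf : R) (sel1 sel0 : 'I_r -> 'I_n)
  (h1 : nn_selection (Zdata X hq V) W (skeleton (Zdata X hq V) u) true sel1)
  (h0 : nn_selection (Zdata X hq V) W (skeleton (Zdata X hq V) u) false sel0)
  (hL : lipschitz_on
          (fun z => (exists i, z = Zdata X hq V i) \/
                    (exists j, z = skeleton (Zdata X hq V) u j))
          (fun z => f (TZ (Zdata X hq V) z)) Lf) :
  `| emp_int X sel1 (fun x => f (TZ (Zdata X hq V) (Piq X hq V x)))
     - emp_int X sel0 (fun x => f (TZ (Zdata X hq V) (Piq X hq V x))) |
  <= Lf * (delta_rot (Zdata X hq V) (skeleton (Zdata X hq V) u) sel1
           + delta_rot (Zdata X hq V) (skeleton (Zdata X hq V) u) sel0).
Proof.
set Z := Zdata X hq V; set v := skeleton Z u.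
set phi := fun z => f (TZ Z z).
have Lpt : forall i j, `|phi (Z i) - phi (v j)| <= Lf * norm2 (Z i - v j).
  by move=> i j; apply: hL; [left; exists i | right; exists j].
have Lnn : forall i j, 0 <= Lf * norm2 (Z i - v j).
  by move=> i j; apply: le_trans (Lpt i j).
have D1 := @delta_bound _ _ _ _ Z v sel1 Lf (fun j => Lnn (sel1 j) j).
have D0 := @delta_bound _ _ _ _ Z v sel0 Lf (fun j => Lnn (sel0 j) j).
set d1 := delta_rot Z v sel1; set d0 := delta_rot Z v sel0.
have term : forall j, `|phi (Z (sel1 j)) - phi (Z (sel0 j))| <= Lf * (d1 + d0).
  move=> j.
  have -> : phi (Z (sel1 j)) - phi (Z (sel0 j)) =
     (phi (Z (sel1 j)) - phi (v j)) - (phi (Z (sel0 j)) - phi (v j)) by ring.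
  apply: le_trans (ler_normB _ _) _; rewrite mulrDr.
  by apply: lerD; apply: le_trans (Lpt _ _) _; [exact: D1|exact: D0].
have C0 : 0 <= Lf * (d1 + d0).
  rewrite mulrDr; apply: addr_ge0.
    exact: (@delta_nonneg _ _ _ _ Z v sel1 Lf (fun j => Lnn (sel1 j) j)).
  exact: (@delta_nonneg _ _ _ _ Z v sel0 Lf (fun j => Lnn (sel0 j) j)).
rewrite /emp_int -mulrBr -sumrB.
rewrite normrM ger0_norm ?invr_ge0 ?ler0n //.
apply: le_trans (ler_wpM2l _ (ler_norm_sum _ _ _)) _; first by rewrite invr_ge0 ler0n.
apply: le_trans (ler_wpM2l _ (ler_sum _ (fun j _ => term j))) _; first by rewrite invr_ge0 ler0n.
by rewrite sumr_const card_ord; apply: natVK_le.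
Qed.
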